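(* Let $N$ be a finite set and $\mathcal{F} \subseteq 2^N$ a set family. If $\mathcal{F}$ satisfies (B$^\natural$-EXC$_{\rm m}$), then $\mathcal{F}$ satisfies (B$^\natural$-EXC).
   Context: Notation: $X - i = X \setminus \{i\}$, $Y + i = Y \cup \{i\}$, $X - i + j = (X\setminus\{i\})\cup\{j\}$, $Y + i - j = (Y \cup\{i\})\setminus\{j\}$. (B$^\natural$-EXC): for any $X, Y \in \mathcal{F}$ and $i \in X\setminus Y$, either (i) $X - i \in \mathcal{F}$ and $Y + i \in \mathcal{F}$, or (ii) there exists $j \in Y\setminus X$ with $X - i + j \in \mathcal{F}$ and $Y + i - j \in \mathcal{F}$. (B$^\natural$-EXC$_{\rm m}$): for any $X, Y \in \mathcal{F}$ and $I \subseteq X\setminus Y$ there exists $J \subseteq Y\setminus X$ with $(X\setminus I)\cup J \in \mathcal{F}$ and $(Y\setminus J)\cup I \in \mathcal{F}$. *)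

(* Defs.v *)
From mathcomp Require Import all_boot.
Set Implicit Arguments. Unset Strict Implicit. Unset Printing Implicit Defensive.

Definition bnat_exc (N : finType) (F : {set {set N}}) : Prop :=
  forall X Y, X \in F -> Y \in F -> forall i, i \in X :\: Y ->
    (X :\ i \in F /\ i |: Y \in F) \/
    (exists2 j, j \in Y :\: X & (j |: (X :\ i) \in F /\ (i |: Y) :\ j \in F)).

Definition bnat_exc_m (N : finType) (F : {set {set N}}) : Prop :=
  forall X Y, X \in F -> Y \in F -> forall I : {set N}, I \subset X :\: Y ->
    exists2 J : {set N}, J \subset Y :\: X &
      ((X :\: I) :|: J \in F /\ (Y :\: J) :|: I \in F).

(* Main.v *)
Require Import Defs.
From mathcomp Require Import all_boot.
From mathcomp Require Import zify.

Set Implicit Arguments. Unset Strict Implicit. Unset Printing Implicit Defensive.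

Ltac rwfacts :=
  repeat (rewrite ?eqxx /=; match goal with
  | H : is_true (?a != ?b) |- context [?a == ?b] => rewrite (negbTE H)
  | H : is_true (?a != ?b) |- context [?b == ?a] => rewrite eq_sym (negbTE H)
  | H : is_true (?a \in ?S) |- context [?a \in ?S] => rewrite H
  | H : is_true (?a \notin ?S) |- context [?a \in ?S] => rewrite (negbTE H)
  end).

Ltac elimeq x :=
  repeat match goal with
  | |- context [x == ?e] => case: (eqVneq x e) => [?|?]; [subst x; rwfacts|]
  end.

Ltac brute hJ J X Y :=
  let x := fresh "x" in
  let hx := fresh "hx" in
  let hxX := fresh "hxX" in
  let hxY := fresh "hxY" in
  move=> x; rewrite !inE; elimeq x; rwfacts;
  try (case: (boolP (x \in J)) => hx;
   [ move: (subsetP hJ x hx); rewrite !inE => /andP [] /negbTE hxX hxY; rewrite ?hxX ?hxY | rewrite ?(negbTE hx) ]);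
  rwfacts;
  try (case: (x \in X)); try (case: (x \in Y)); rwfacts; done.

Ltac seteq hJ J X Y := apply/setP; brute hJ J X Y.
Ltac setsub hJ J X Y := apply/subsetP; let x := fresh "x" in move=> x; apply/implyP; move: x; brute hJ J X Y.

Lemma sub1_cases (T : finType) (K D : {set T}) (e : T) :
  K \subset D -> D \subset [set e] -> K = set0 \/ K = [set e].
Proof.
move=> hK hD; have := subset_trans hK hD; rewrite subset1.
by case/orP=> /eqP ->; [right|left].
Qed.

Definition concl (N : finType) (F : {set {set N}}) X Y i :=
    (X :\ i \in F /\ i |: Y \in F) \/
    (exists2 j, j \in Y :\: X & (j |: (X :\ i) \in F /\ (i |: Y) :\ j \in F)).

Lemma memF (N : finType) (F : {set {set N}}) A B : A = B -> A \in F -> B \in F.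
Proof. by move=> ->. Qed.

Section Main.
Variables (N : finType) (F : {set {set N}}).
Hypothesis hm : bnat_exc_m F.


Lemma meas_lt (P Q X Y : {set N}) b n :
  P :\: Q = X :\: Y -> Q :\: P \subset (Y :\: X) :\ b -> b \in Y :\: X ->
  #|X :\: Y| + #|Y :\: X| < n.+1 -> #|P :\: Q| + #|Q :\: P| < n.
Proof.
move=> e s hb hn; rewrite e; have := subset_leq_card s.
move: hn; rewrite (cardsD1 b (Y :\: X)) hb /=; lia.
Qed.

Ltac kfacts hk k X Y J b hiY :=
  let hkb := fresh "hkb" in let hkX := fresh "hkX" in let hkY := fresh "hkY" in
  let hkJ := fresh "hkJ" in let hki := fresh "hki" in let e := fresh "e" in
  (have hkb : k != b by apply/negP => /eqP e; move: hk; rewrite e !inE eqxx ?andbF);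
  (have hkX : k \notin X by apply/negP => e; move: hk; rewrite !inE e ?orbT ?andbF);
  (have hkY : k \in Y by move: hk; rewrite !inE => /andP [] _ /andP [] _);
  (have hkJ : k \notin J by apply/negP => e; move: hk; rewrite !inE e hkb ?orbT ?andbF);
  (have hki : k != i by apply/negP => /eqP e; move: hkY; rewrite e (negbTE hiY)).

Lemma main n : forall X Y i, #|X :\: Y| + #|Y :\: X| < n -> X \in F -> Y \in F ->
  i \in X -> i \notin Y -> concl F X Y i.
Proof.
elim: n => // n IHo X Y i hn hX hY hiX hiY.
have inner : forall m (J : {set N}), #|J| < m -> J \subset Y :\: X -> (X :\ i) :|: J \in F ->
    (Y :\: J) :|: [set i] \in F -> concl F X Y i.
  elim => // m IHi J hJc hJ hX' hY'.
  have hiJ : i \notin J by apply/negP => /(subsetP hJ); rewrite inE hiX.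
  case: (set_0Vmem J) => [J0 | [b hbJ]].
    left; subst J; split; [apply: memF hX' | apply: memF hY']; seteq hJ (set0 : {set N}) X Y.
  have hbY : b \in Y by move: (subsetP hJ b hbJ); rewrite inE => /andP [].
  have hbX : b \notin X by move: (subsetP hJ b hbJ); rewrite inE => /andP [].
  have hib : i != b by apply/eqP => e; move: hiY; rewrite e hbY.
  have hbYX : b \in Y :\: X by rewrite inE hbX hbY.
  case: (set_0Vmem (J :\ b)) => [A0 | [a haA]].
    have eJ : J = [set b].
      apply/setP => x; rewrite inE; apply/idP/eqP => [hx|->//]; apply/eqP.
      apply/negPn/negP => hxb; have : x \in J :\ b by rewrite !inE hxb hx.
      by rewrite A0 inE.
    subst J; right; exists b => //; split.
      by apply: memF hX'; seteq hJ [set b] X Y.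
    by apply: memF hY'; seteq hJ [set b] X Y.
  have hA : (X :\ i) :|: (J :\ b) \in F -> (Y :\: (J :\ b)) :|: [set i] \in F -> concl F X Y i.
    apply: IHi.
      by move: hJc; rewrite (cardsD1 b J) hbJ.
    by apply: subset_trans hJ; apply: subD1set.
  have hXside : ((X :\ i) :|: (J :\ b) \in F /\ b |: X \in F) \/
                (X :|: (J :\ b) \in F /\ b |: (X :\ i) \in F).
    case: (@hm _ _ hX' hX [set b]) => [|K hK [h1 h2]]; first by setsub hJ J X Y.
    case: (sub1_cases (e := i) hK) => [|eK|eK]; first by setsub hJ J X Y.
      subst K; left; split; [apply: memF h1 | apply: memF h2]; seteq hJ J X Y.
    subst K; right; split; [apply: memF h1 | apply: memF h2]; seteq hJ J X Y.
  have hYside : (Y :\ b \in F /\ (Y :\: (J :\ b)) :|: [set i] \in F) \/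
                ((i |: Y) :\ b \in F /\ Y :\: (J :\ b) \in F).
    case: (@hm _ _ hY hY' [set b]) => [|K hK [h1 h2]]; first by setsub hJ J X Y.
    case: (sub1_cases (e := i) hK) => [|eK|eK]; first by setsub hJ J X Y.
      subst K; left; split; [apply: memF h1 | apply: memF h2]; seteq hJ J X Y.
    subst K; right; split; [apply: memF h1 | apply: memF h2]; seteq hJ J X Y.
  case: hXside => [[hXA hXb] | [hXpA hXib]]; case: hYside => [[hYmb hYA] | [hYb' hYmA]].
  - exact: hA.
  -
    have hiP : i \in b |: X by rewrite !inE hiX orbT.
    have hiQ : i \notin Y :\: (J :\ b) by rewrite !inE (negbTE hiY) andbF.
    case: (IHo _ _ i _ hXb hYmA hiP hiQ).
      apply: (meas_lt (X := X) (Y := Y) (b := b)) => //; [seteq hJ J X Y | setsub hJ J X Y].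
      move=> [hP1 hQ1]; right; exists b => //; split => //; apply: memF hP1; seteq hJ J X Y.
    move=> [k hk [hP2 hQ2]].
    kfacts hk k X Y J b hiY.
    have hkYX : k \in Y :\: X by rewrite inE hkX hkY.
    case: (@hm _ _ hP2 hX [set b]) => [|K hK [h41 h42]]; first by setsub hJ J X Y.
    case: (sub1_cases (e := i) hK) => [|eK|eK]; first by setsub hJ J X Y.
    + subst K.
      have hXik : k |: (X :\ i) \in F by apply: memF h41; seteq hJ J X Y.
      case: (@hm _ _ hYb' hQ2 (J :\ b)) => [|K hK5 [h51 h52]]; first by setsub hJ J X Y.
      case: (sub1_cases (e := b) hK5) => [|eK|eK]; first by setsub hJ J X Y.
        subst K; right; exists k => //; split => //; apply: memF h52; seteq hJ J X Y.
      subst K; apply: hA => //; apply: memF h51; seteq hJ J X Y.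
    + subst K; right; exists b => //; split => //; apply: memF h42; seteq hJ J X Y.
  -
    have hiP : i \in X :|: (J :\ b) by rewrite !inE hiX.
    have hiQ : i \notin Y :\ b by rewrite !inE (negbTE hiY) andbF.
    case: (IHo _ _ i _ hXpA hYmb hiP hiQ).
      apply: (meas_lt (X := X) (Y := Y) (b := b)) => //; [seteq hJ J X Y | setsub hJ J X Y].
      move=> [hP1 hQ1]; right; exists b => //; split => //; apply: memF hQ1; seteq hJ J X Y.
    move=> [k hk [hP2 hQ2]].
    kfacts hk k X Y J b hiY.
    have hkYX : k \in Y :\: X by rewrite inE hkX hkY.
    case: (@hm _ _ hY hQ2 [set b]) => [|K hK [h41 h42]]; first by setsub hJ J X Y.
    case: (sub1_cases (e := i) hK) => [|eK|eK]; first by setsub hJ J X Y.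
    + subst K.
      have hYik : (i |: Y) :\ k \in F by apply: memF h42; seteq hJ J X Y.
      case: (@hm _ _ hP2 hXib (J :\ b)) => [|K hK5 [h51 h52]]; first by setsub hJ J X Y.
      case: (sub1_cases (e := b) hK5) => [|eK|eK]; first by setsub hJ J X Y.
        subst K; right; exists k => //; split => //; apply: memF h51; seteq hJ J X Y.
      subst K; apply: hA => //; apply: memF h52; seteq hJ J X Y.
    + subst K; right; exists b => //; split => //; apply: memF h41; seteq hJ J X Y.
  - right; exists b => //.
case: (@hm _ _ hX hY [set i]) => [|J hJ [h1 h2]]; first by setsub hY X X Y.
exact: (inner #|J|.+1 J).
Qed.
End Main.

Theorem proposition3 (N : finType) (F : {set {set N}}) :
  bnat_exc_m F -> bnat_exc F.
Proof.
move=> hm X Y hX hY i; rewrite inE => /andP [hiY hiX].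
exact: (main hm (n := (#|X :\: Y| + #|Y :\: X|).+1)).
Qed.
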